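(* Let $t$ be a term with $\mathrm{ofv}(t)=\emptyset$. The following are equivalent: (1) $t$ is $\to_w$-normal; (2) $t$ is $\to_y$-normal; (3) $t$ is a strict answer, i.e. generated by $a_s ::= v\mid a_s[x\backslash a_s']$ with $x\in\mathrm{fv}(a_s)$.
   Context: Terms: $t ::= x \mid \lambda x.t \mid t\,u \mid t[x\backslash u]$ ($t[x\backslash u]$ an explicit substitution binding $x$ in $t$; terms up to $\alpha$). Values $v ::= \lambda x.t$. Shallow free variables: $\mathrm{ofv}(x)=\{x\}$, $\mathrm{ofv}(\lambda x.t)=\emptyset$, $\mathrm{ofv}(tu)=\mathrm{ofv}(t)\cup\mathrm{ofv}(u)$, $\mathrm{ofv}(t[x\backslash u])=(\mathrm{ofv}(t)\setminus\{x\})\cup\mathrm{ofv}(u)$. Substitution contexts $S ::= \langle\cdot\rangle\mid S[x\backslash u]$. Weak contexts $W ::= \langle\cdot\rangle \mid W\,t \mid t\,W \mid t[x\backslash W] \mid W[x\backslash u]$; for a class of contexts, $K\langle\langle t\rangle\rangle$ is plugging without capture of free variables of $t$. Root rules: $S\langle\lambda x.t\rangle u\mapsto_m S\langle t[x\backslash u]\rangle$; for a class of contexts $K$, $K\langle\langle x\rangle\rangle[x\backslash u]\mapsto_{e_K} K\langle\langle u\rangle\rangle[x\backslash u]$; $t[x\backslash S\langle v\rangle]\mapsto_{gcv} S\langle t\rangle$ if $x\notin\mathrm{fv}(t)$. $\to_w$ is the union of the closures under weak contexts of $\mapsto_m$, $\mapsto_{e_W}$ (with $K$ = weak contexts) and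 $\mapsto_{gcv}$. Call-by-silly strategy: answers $a ::= v\mid a[x\backslash a']$; name contexts $N ::= \langle\cdot\rangle\mid N t\mid N[x\backslash t]$; auxiliary contexts $A ::= \langle\cdot\rangle\mid a[x\backslash A]\mid A[x\backslash t]$; silly contexts $Y ::= A\langle N\rangle$. $\to_{ym} := Y\langle\mapsto_m\rangle$; $\to_{yeAY} := A\langle\mapsto_{e_Y}\rangle$; $\to_{yeYN} := Y\langle\mapsto_{e_N}\rangle$; $\to_{ygcv}:=Y\langle\mapsto_{gcv}\rangle$ (closures of the root rules under the indicated contexts); $\to_y$ is their union. *)

(* Defs.v *)
(* Terms of the linear substitution calculus with explicit
   substitutions, represented with de Bruijn indices (so terms are
   automatically taken up to alpha-equivalence). *)
From Stdlib Require Import Arith.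

(* Var n | Lam t (binds 0 in t) | App t u | ES t u  =  t[x\u] (binds 0 in t) *)
Inductive term : Type :=
| Var : nat -> term
| Lam : term -> term
| App : term -> term -> term
| ES  : term -> term -> term.

Definition is_value (t : term) : Prop := exists b, t = Lam b.

Fixpoint lift (k c : nat) (t : term) : term :=
  match t with
  | Var n => if Nat.leb c n then Var (n + k) else Var n
  | Lam b => Lam (lift k (S c) b)
  | App t1 t2 => App (lift k c t1) (lift k c t2)
  | ES t1 t2 => ES (lift k (S c) t1) (lift k c t2)
  end.

(* lower c t : decrease every index > c by one (used when index c does not occur) *)
Fixpoint lower (c : nat) (t : term) : term :=
  match t with
  | Var n => if Nat.ltb c n then Var (n - 1) else Var n
  | Lam b => Lam (lower (S c) b)
  | App t1 t2 => App (lower c t1) (lower c t2)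
  | ES t1 t2 => ES (lower (S c) t1) (lower c t2)
  end.

Fixpoint fv_in (n : nat) (t : term) : Prop :=
  match t with
  | Var m => m = n
  | Lam b => fv_in (S n) b
  | App t1 t2 => fv_in n t1 \/ fv_in n t2
  | ES t1 t2 => fv_in (S n) t1 \/ fv_in n t2
  end.

Fixpoint ofv_in (n : nat) (t : term) : Prop :=
  match t with
  | Var m => m = n
  | Lam _ => False
  | App t1 t2 => ofv_in n t1 \/ ofv_in n t2
  | ES t1 t2 => ofv_in (S n) t1 \/ ofv_in n t2
  end.

Inductive ctx : Type :=
| Hole : ctx
| CLam : ctx -> ctx
| CAppL : ctx -> term -> ctx
| CAppR : term -> ctx -> ctx
| CESL : ctx -> term -> ctx
| CESR : term -> ctx -> ctx.

(* ordinary plugging (may capture) *)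
Fixpoint plug (C : ctx) (t : term) : term :=
  match C with
  | Hole => t
  | CLam C' => Lam (plug C' t)
  | CAppL C' u => App (plug C' t) u
  | CAppR u C' => App u (plug C' t)
  | CESL C' u => ES (plug C' t) u
  | CESR u C' => ES u (plug C' t)
  end.

Fixpoint depth (C : ctx) : nat :=
  match C with
  | Hole => 0
  | CLam C' => S (depth C')
  | CAppL C' _ => depth C'
  | CAppR _ C' => depth C'
  | CESL C' _ => S (depth C')
  | CESR _ C' => depth C'
  end.

Fixpoint ccomp (C1 C2 : ctx) : ctx :=
  match C1 with
  | Hole => C2
  | CLam C' => CLam (ccomp C' C2)
  | CAppL C' u => CAppL (ccomp C' C2) u
  | CAppR u C' => CAppR u (ccomp C' C2)
  | CESL C' u => CESL (ccomp C' C2) u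
  | CESR u C' => CESR u (ccomp C' C2)
  end.

Fixpoint isS (C : ctx) : Prop :=
  match C with
  | Hole => True
  | CESL C' _ => isS C'
  | _ => False
  end.

Fixpoint isW (C : ctx) : Prop :=
  match C with
  | Hole => True
  | CLam _ => False
  | CAppL C' _ => isW C'
  | CAppR _ C' => isW C'
  | CESL C' _ => isW C'
  | CESR _ C' => isW C'
  end.

Inductive answer : term -> Prop :=
| ans_val : forall v, is_value v -> answer v
| ans_es : forall a a', answer a -> answer a' -> answer (ES a a').

Inductive strict_answer : term -> Prop :=
| sans_val : forall v, is_value v -> strict_answer v
| sans_es : forall a a', strict_answer a -> strict_answer a' ->
    fv_in 0 a -> strict_answer (ES a a').

Fixpoint isN (C : ctx) : Prop :=
  match C with
  | Hole => True
  | CAppL C' _ => isN C'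
  | CESL C' _ => isN C'
  | _ => False
  end.

Fixpoint isA (C : ctx) : Prop :=
  match C with
  | Hole => True
  | CESR a C' => answer a /\ isA C'
  | CESL C' _ => isA C'
  | _ => False
  end.

Definition isY (C : ctx) : Prop :=
  exists A N, isA A /\ isN N /\ C = ccomp A N.

Definition rel := term -> term -> Prop.

(* S<\x.t> u  |->_m  S<t[x\u]>   (u not captured by S) *)
Definition rule_m : rel := fun t1 t2 =>
  exists S b u, isS S /\ t1 = App (plug S (Lam b)) u /\
                t2 = plug S (ES b (lift (depth S) 0 u)).

(* K<<x>>[x\u]  |->_{e_K}  K<<u>>[x\u]  (no capture, for K in class P) *)
Definition rule_e (P : ctx -> Prop) : rel := fun t1 t2 =>
  exists K u, P K /\ t1 = ES (plug K (Var (depth K))) u /\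
              t2 = ES (plug K (lift (S (depth K)) 0 u)) u.

(* t[x\S<v>]  |->_gcv  S<t>  if x notin fv(t) *)
Definition rule_gcv : rel := fun t1 t2 =>
  exists b S v, isS S /\ is_value v /\ ~ fv_in 0 b /\
                t1 = ES b (plug S v) /\
                t2 = plug S (lift (depth S) 0 (lower 0 b)).

Definition closure (P : ctx -> Prop) (R : rel) : rel := fun t1 t2 =>
  exists C r1 r2, P C /\ R r1 r2 /\ t1 = plug C r1 /\ t2 = plug C r2.

Definition union (R1 R2 : rel) : rel := fun t1 t2 => R1 t1 t2 \/ R2 t1 t2.

Definition step_w : rel :=
  union (closure isW rule_m)
        (union (closure isW (rule_e isW)) (closure isW rule_gcv)).

Definition step_ym : rel := closure isY rule_m.
Definition step_yeAY : rel := closure isA (rule_e isY).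
Definition step_yeYN : rel := closure isY (rule_e isN).
Definition step_ygcv : rel := closure isY rule_gcv.
Definition step_y : rel :=
  union step_ym (union step_yeAY (union step_yeYN step_ygcv)).

Definition normal (R : rel) (t : term) : Prop := ~ exists u, R t u.

(* Main.v *)
Require Import Defs.
From Stdlib Require Import Arith Lia Classical.

Lemma plug_ccomp C1 C2 t : plug (ccomp C1 C2) t = plug C1 (plug C2 t).
Proof. induction C1; simpl; congruence. Qed.

Lemma depth_ccomp C1 C2 : depth (ccomp C1 C2) = depth C1 + depth C2.
Proof. induction C1; simpl; lia. Qed.

Lemma ccomp_assoc C1 C2 C3 : ccomp (ccomp C1 C2) C3 = ccomp C1 (ccomp C2 C3).
Proof. induction C1; simpl; congruence. Qed.

Lemma isA_ccomp C1 C2 : isA C1 -> isA C2 -> isA (ccomp C1 C2).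
Proof. induction C1; simpl; tauto. Qed.

Lemma isN_ccomp C1 C2 : isN C1 -> isN C2 -> isN (ccomp C1 C2).
Proof. induction C1; simpl; tauto. Qed.

Lemma isS_ccomp C1 C2 : isS C1 -> isS C2 -> isS (ccomp C1 C2).
Proof. induction C1; simpl; tauto. Qed.

Lemma isS_ccomp_r C1 C2 : isS (ccomp C1 C2) -> isS C2.
Proof. induction C1; simpl; tauto. Qed.

Lemma isS_ccomp_l C1 C2 : isS (ccomp C1 C2) -> isS C1.
Proof. induction C1; simpl; tauto. Qed.

Lemma isW_ccomp C1 C2 : isW C1 -> isW C2 -> isW (ccomp C1 C2).
Proof. induction C1; simpl; tauto. Qed.

Lemma isS_N C : isS C -> isN C.
Proof. induction C; simpl; tauto. Qed.
Lemma isS_A C : isS C -> isA C.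
Proof. induction C; simpl; tauto. Qed.
Lemma isN_W C : isN C -> isW C.
Proof. induction C; simpl; tauto. Qed.
Lemma isA_W C : isA C -> isW C.
Proof. induction C; simpl; tauto. Qed.
Lemma isN_Y C : isN C -> isY C.
Proof. intro H. exists Hole, C. simpl. auto. Qed.
Lemma isY_W C : isY C -> isW C.
Proof. intros (A & N & HA & HN & ->). apply isW_ccomp; [apply isA_W|apply isN_W]; auto. Qed.

Lemma strict_answer_answer t : strict_answer t -> answer t.
Proof. induction 1; [apply ans_val|apply ans_es]; auto. Qed.

Lemma answer_plug t : answer t -> exists S v, isS S /\ is_value v /\ t = plug S v.
Proof.
  induction 1.
  - exists Hole, v; simpl; auto.
  - destruct IHanswer1 as (S & v & HS & Hv & ->).
    exists (CESL S a'), v; simpl; auto.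
Qed.

Lemma ofv_plug C n t : isW C -> ofv_in (depth C + n) t -> ofv_in n (plug C t).
Proof.
  revert n; induction C; simpl; intros n HW H; try tauto.
  - left; auto.
  - right; auto.
  - left. apply IHC; auto. replace (depth C + S n) with (S (depth C + n)) by lia. auto.
  - right; auto.
Qed.

Lemma ofv_var N k : isW N -> depth N <= k -> ofv_in (k - depth N) (plug N (Var k)).
Proof.
  intros HW Hk. apply ofv_plug; auto. simpl. lia.
Qed.

Lemma ccomp_hole C : ccomp C Hole = C.
Proof. induction C; simpl; congruence. Qed.

Lemma split_varN N k : isN N -> k < depth N ->
  exists N1 N2 u, isN N1 /\ isN N2 /\ N = ccomp N1 (CESL N2 u) /\ depth N2 = k.
Proof.
  induction N; simpl; intros HN Hk; try tauto; try lia.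
  - destruct (IHN HN Hk) as (N1 & N2 & u & H1 & H2 & -> & Hd).
    exists (CAppL N1 t), N2, u; simpl; auto.
  - destruct (Nat.eq_dec k (depth N)) as [->|Hne].
    + exists Hole, N, t; simpl; auto.
    + destruct (IHN HN ltac:(lia)) as (N1 & N2 & u & H1 & H2 & -> & Hd).
      exists (CESL N1 t), N2, u; simpl; auto.
Qed.

Lemma split_varA N k : isA N -> k < depth N ->
  exists N1 N2 u, isA N1 /\ isA N2 /\ N = ccomp N1 (CESL N2 u) /\ depth N2 = k.
Proof.
  induction N; simpl; intros HN Hk; try tauto; try lia.
  - destruct (Nat.eq_dec k (depth N)) as [->|Hne].
    + exists Hole, N, t; simpl; auto.
    + destruct (IHN HN ltac:(lia)) as (N1 & N2 & u & H1 & H2 & -> & Hd).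
      exists (CESL N1 t), N2, u; simpl; auto.
  - destruct HN as [Ha HN].
    destruct (IHN HN Hk) as (N1 & N2 & u & H1 & H2 & -> & Hd).
    exists (CESR t N1), N2, u; simpl; auto.
Qed.

Lemma split_app N : isN N -> ~ isS N ->
  exists N1 S u, isN N1 /\ isS S /\ N = ccomp N1 (CAppL S u).
Proof.
  induction N; simpl; intros HN HS; try tauto.
  - destruct (classic (isS N)) as [H|H].
    + exists Hole, N, t; simpl; auto.
    + destruct (IHN HN H) as (N1 & S & u & H1 & H2 & ->).
      exists (CAppL N1 t), S, u; simpl; auto.
  - destruct (IHN HN HS) as (N1 & S & u & H1 & H2 & ->).
    exists (CESL N1 t), S, u; simpl; auto.
Qed.

Definition closed t := forall x, ~ ofv_in x t.

Lemma isY_AN E N : isA E -> isN N -> isY (ccomp E N).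
Proof. intros. exists E, N. auto. Qed.

Lemma var_step E N k : isA E -> isN N -> closed (plug E (plug N (Var k))) ->
  exists u, step_y (plug E (plug N (Var k))) u.
Proof.
  intros HE HN Hc.
  destruct (le_lt_dec (depth N) k) as [Hle|Hlt].
  - destruct (le_lt_dec (depth E) (k - depth N)) as [Hle2|Hlt2].
    + exfalso. apply (Hc (k - depth N - depth E)). apply ofv_plug; [apply isA_W; auto|].
      replace (depth E + (k - depth N - depth E)) with (k - depth N) by lia.
      apply ofv_var; auto. apply isN_W; auto.
    + destruct (split_varA E (k - depth N) HE Hlt2) as (E1 & E2 & u & H1 & H2 & -> & Hd).
      eexists. right. left.
      exists E1, (ES (plug (ccomp E2 N) (Var (depth (ccomp E2 N)))) u),
        (ES (plug (ccomp E2 N) (lift (S (depth (ccomp E2 N))) 0 u)) u).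
      split; auto. split.
      * exists (ccomp E2 N), u. split; [apply isY_AN; auto|]. auto.
      * rewrite !plug_ccomp. simpl. rewrite depth_ccomp.
        replace (depth E2 + depth N) with k by lia. auto.
  - destruct (split_varN N k HN Hlt) as (N1 & N2 & u & H1 & H2 & -> & Hd).
    eexists. right. right. left.
    exists (ccomp E N1), (ES (plug N2 (Var (depth N2))) u),
      (ES (plug N2 (lift (S (depth N2)) 0 u)) u).
    split; [apply isY_AN; auto|]. split.
    + exists N2, u. auto.
    + rewrite !plug_ccomp. simpl. subst. auto.
Qed.

Lemma reducible E N t : isA E -> isN N -> ~ isS N -> closed (plug E (plug N t)) ->
  exists u, step_y (plug E (plug N t)) u.
Proof.
  revert N; induction t; intros N HE HN HS Hc.
  - apply var_step; auto.
  - destruct (split_app N HN HS) as (N1 & S & u & H1 & H2 & ->).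
    eexists. left.
    exists (ccomp E N1), (App (plug S (Lam t)) u), (plug S (ES t (lift (depth S) 0 u))).
    split; [apply isY_AN; auto|]. split.
    + exists S, t, u; auto.
    + rewrite !plug_ccomp; simpl; auto.
  - specialize (IHt1 (ccomp N (CAppL Hole t2))).
    rewrite plug_ccomp in IHt1; simpl in IHt1. apply IHt1; auto.
    + apply isN_ccomp; simpl; auto.
    + intro H; apply isS_ccomp_r in H; simpl in H; auto.
  - specialize (IHt1 (ccomp N (CESL Hole t2))).
    rewrite plug_ccomp in IHt1; simpl in IHt1. apply IHt1; auto.
    + apply isN_ccomp; simpl; auto.
    + intro H; apply isS_ccomp_l in H; auto.
Qed.

Lemma main t E : isA E -> closed (plug E t) -> normal step_y (plug E t) -> strict_answer t.
Proof.
  revert E; induction t; intros E HE Hc Hn.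
  - exfalso. apply Hn. apply (var_step E Hole); simpl; auto.
  - apply sans_val. eexists; eauto.
  - exfalso. apply Hn.
    apply (reducible E (CAppL Hole t2) t1); simpl; auto.
  - assert (H1 : strict_answer t1).
    { apply (IHt1 (ccomp E (CESL Hole t2))); rewrite ?plug_ccomp; simpl; auto.
      apply isA_ccomp; simpl; auto. }
    assert (H2 : strict_answer t2).
    { apply (IHt2 (ccomp E (CESR t1 Hole))); rewrite ?plug_ccomp; simpl; auto.
      apply isA_ccomp; simpl; auto. split; auto. apply strict_answer_answer; auto. }
    apply sans_es; auto.
    destruct (classic (fv_in 0 t1)) as [H|H]; auto.
    exfalso. apply Hn.
    destruct (answer_plug t2 (strict_answer_answer _ H2)) as (S & v & HS & Hv & Ht2).
    eexists. right; right; right.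
    exists E, (ES t1 t2), (plug S (lift (depth S) 0 (lower 0 t1))).
    split. { exists E, Hole. rewrite ccomp_hole. simpl; auto. }
    split; auto.
    exists t1, S, v. subst t2. repeat split; auto.
Qed.

Lemma weak_sub C r : isW C -> strict_answer (plug C r) -> strict_answer r.
Proof.
  induction C; simpl; intros HW Hs; try tauto.
  - inversion Hs; subst. destruct H as [b Hb]; discriminate.
  - inversion Hs; subst. destruct H as [b Hb]; discriminate.
  - inversion Hs; subst. destruct H as [b Hb]; discriminate. auto.
  - inversion Hs; subst. destruct H as [b Hb]; discriminate. auto.
Qed.

Lemma not_sa_app a b : ~ strict_answer (App a b).
Proof. intro Hs. inversion Hs; subst. destruct H as [c Hc]; discriminate. Qed.
Lemma not_sa_var n : ~ strict_answer (Var n).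
Proof. intro Hs. inversion Hs; subst. destruct H as [c Hc]; discriminate. Qed.

Lemma strict_normal t : strict_answer t -> normal step_w t.
Proof.
  intros Hs [u Hu].
  destruct Hu as [H|[H|H]]; destruct H as (C & r1 & r2 & HC & HR & -> & ->);
    apply weak_sub in Hs; auto.
  - destruct HR as (S & b & u & _ & -> & _). eapply not_sa_app; eauto.
  - destruct HR as (K & u & HK & -> & _).
    inversion Hs; subst. destruct H as [c Hc]; discriminate.
    apply weak_sub in H1; auto. eapply not_sa_var; eauto.
  - destruct HR as (b & S & v & _ & _ & Hb & -> & _).
    inversion Hs; subst. destruct H as [c Hc]; discriminate. auto.
Qed.

Lemma y_w t u : step_y t u -> step_w t u.
Proof.
  intros [H|[H|[H|H]]]; destruct H as (C & r1 & r2 & HC & HR & -> & ->).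
  - left. exists C, r1, r2. split; auto. apply isY_W; auto.
  - right; left. exists C, r1, r2. split; [apply isA_W; auto|]. split; auto.
    destruct HR as (K & u & HK & E1 & E2). exists K, u. split; auto. apply isY_W; auto.
  - right; left. exists C, r1, r2. split; [apply isY_W; auto|]. split; auto.
    destruct HR as (K & u & HK & E1 & E2). exists K, u. split; auto. apply isN_W; auto.
  - right; right. exists C, r1, r2. split; auto. apply isY_W; auto.
Qed.

Theorem lemma11p3 (t : term) :
  (forall x, ~ ofv_in x t) ->
  (normal step_w t <-> normal step_y t) /\
  (normal step_y t <-> strict_answer t).
Proof.
  intros Hc.
  assert (A1 : normal step_w t -> normal step_y t).
  { intros Hw [u Hu]. apply Hw. exists u. apply y_w; auto. }
  assert (A2 : normal step_y t -> strict_answer t).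
  { intros Hy. apply (main t Hole); simpl; auto. }
  pose proof (strict_normal t). tauto.
Qed.
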